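(* Let $n\ge1$ and let $A\subseteq\mathbb{R}^n$ (Euclidean norm) be a nonempty approximately convex set with $\mathcal{H}(A,\operatorname{Co}(A))\ge\log_2 n-1$. Then for every integer $j$ with $1\le j\le n$, $$\operatorname{diam}(A)\ge\frac{(\log_2 n-1-\lceil\log_2 j\rceil)\sqrt j}{\sqrt{n-j+1}}\,\sqrt n .$$ In particular $\operatorname{diam}(A)\ge0.7525\sqrt n$ for all $n\ge20$, and $\operatorname{diam}(A)\ge0.768\sqrt n$ for all sufficiently large $n$.
   Context: A set $A$ is approximately convex if $d(tx+(1-t)y,A)\le1$ for all $x,y\in A$, $t\in[0,1]$, where $d(x,A)=\inf_{a\in A}\|x-a\|$. $\mathcal{H}$ is the Hausdorff distance, $\operatorname{Co}$ the convex hull, $\operatorname{diam}(A)=\sup\{\|x-y\|:x,y\in A\}$, and $\lceil x\rceil$ the least integer $\ge x$. *)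

(* Defs.v *)
From HB Require Import structures.
From mathcomp Require Import all_boot all_order all_algebra.
From mathcomp Require Import all_classical all_reals.
From mathcomp Require Import ereal exp.
Set Implicit Arguments. Unset Strict Implicit. Unset Printing Implicit Defensive.
Import Order.TTheory GRing.Theory Num.Theory.
Local Open Scope ring_scope.
Local Open Scope classical_set_scope.

Section Defs.
Variables (R : realType) (n : nat).

Definition enorm (x : 'rV[R]_n) : R := Num.sqrt (\sum_(i < n) x ord0 i ^+ 2).

(* d(x, A) = inf_{a in A} ||x - a|| (extended real; +oo for empty A) *)
Definition edist (x : 'rV[R]_n) (A : set 'rV[R]_n) : \bar R :=
  ereal_inf [set (enorm (x - a))%:E | a in A].

Definition approx_convex (A : set 'rV[R]_n) : Prop :=
  forall x y, A x -> A y -> forall t : R, 0 <= t <= 1 ->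
    (edist (t *: x + (1 - t) *: y) A <= 1%:E)%E.

Definition convex_hull (A : set 'rV[R]_n) : set 'rV[R]_n :=
  [set y | exists (k : nat) (w : 'I_k -> R) (p : 'I_k -> 'rV[R]_n),
     (forall i, 0 <= w i) /\ \sum_(i < k) w i = 1 /\ (forall i, A (p i)) /\
     y = \sum_(i < k) w i *: p i].

Definition hausdorff (A B : set 'rV[R]_n) : \bar R :=
  maxe (ereal_sup [set edist a B | a in A]) (ereal_sup [set edist b A | b in B]).

Definition diam (A : set 'rV[R]_n) : \bar R :=
  ereal_sup [set (enorm (p.1 - p.2))%:E | p in A `*` A].

End Defs.

Definition log2 {R : realType} (x : R) : R := ln x / ln 2.

(* Main.v *)
Require Import Defs.
From HB Require Import structures.
From mathcomp Require Import all_boot all_order all_algebra.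
From mathcomp Require Import all_classical all_reals.
From mathcomp Require Import ereal exp.
From mathcomp Require Import ring lra zify.
Import Order.TTheory GRing.Theory Num.Theory.
Local Open Scope ring_scope.
Local Open Scope classical_set_scope.
Set Implicit Arguments. Unset Strict Implicit. Unset Printing Implicit Defensive.

Section Vec.
Variables (R : realType) (n : nat).
Implicit Types u v w : 'rV[R]_n.

Fact dot_key : unit. Proof. exact: tt. Qed.
Fact sq_key : unit. Proof. exact: tt. Qed.
Definition dot u v : R := locked_with dot_key (\sum_(i < n) u ord0 i * v ord0 i).
Definition sq u : R := locked_with sq_key (\sum_(i < n) u ord0 i ^+ 2).
Lemma dotE u v : dot u v = \sum_(i < n) u ord0 i * v ord0 i.
Proof. by rewrite /dot unlock. Qed.
Lemma sqdefE u : sq u = \sum_(i < n) u ord0 i ^+ 2.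
Proof. by rewrite /sq unlock. Qed.

Lemma sqE u : sq u = dot u u.
Proof. by rewrite sqdefE dotE; apply: eq_bigr => i _; rewrite expr2. Qed.

Lemma enormE u : enorm u = Num.sqrt (sq u).
Proof. by rewrite sqdefE. Qed.

Lemma sq_ge0 u : 0 <= sq u.
Proof. by rewrite sqdefE; apply: sumr_ge0 => i _; apply: sqr_ge0. Qed.

Lemma dotC u v : dot u v = dot v u.
Proof. by rewrite !dotE; apply: eq_bigr => i _; rewrite mulrC. Qed.

Lemma dotDl u v w : dot (u + v) w = dot u w + dot v w.
Proof. by rewrite !dotE -big_split; apply: eq_bigr => i _; rewrite mxE mulrDl. Qed.

Lemma dotZl a u v : dot (a *: u) v = a * dot u v.
Proof. by rewrite !dotE mulr_sumr; apply: eq_bigr => i _; rewrite mxE mulrA. Qed.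

Lemma dotNl u v : dot (- u) v = - dot u v.
Proof. by rewrite -scaleN1r dotZl mulN1r. Qed.

Lemma dotBl u v w : dot (u - v) w = dot u w - dot v w.
Proof. by rewrite dotDl dotNl. Qed.

Lemma dotDr u v w : dot w (u + v) = dot w u + dot w v.
Proof. by rewrite dotC dotDl !(dotC w). Qed.

Lemma dotZr a u v : dot v (a *: u) = a * dot v u.
Proof. by rewrite dotC dotZl dotC. Qed.

Lemma dotBr u v w : dot w (u - v) = dot w u - dot w v.
Proof. by rewrite dotC dotBl !(dotC w). Qed.

Lemma dot0l v : dot 0 v = 0.
Proof. by rewrite !dotE big1 // => i _; rewrite mxE mul0r. Qed.

Lemma dot_suml (I : finType) (c : I -> R) (q : I -> 'rV[R]_n) v :
  dot (\sum_i c i *: q i) v = \sum_i c i * dot (q i) v.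
Proof.
rewrite !dotE; under eq_bigr => k _ do rewrite summxE mulr_suml.
rewrite exchange_big /=; apply: eq_bigr => i _.
by rewrite dotE mulr_sumr; apply: eq_bigr => k _; rewrite mxE mulrA.
Qed.

Lemma sqD u v : sq (u + v) = sq u + 2 * dot u v + sq v.
Proof. rewrite !sqE dotDl !dotDr (dotC v u); ring. Qed.

Lemma sqB u v : sq (u - v) = sq u - 2 * dot u v + sq v.
Proof. rewrite !sqE dotBl !dotBr (dotC v u); ring. Qed.

Lemma sqZ a u : sq (a *: u) = a ^+ 2 * sq u.
Proof. by rewrite !sqE dotZl dotZr mulrA expr2. Qed.

Lemma sqN u : sq (- u) = sq u.
Proof. by rewrite -scaleN1r sqZ sqrrN expr1n mul1r. Qed.

Lemma sq_eq0 u : sq u = 0 -> forall v, dot u v = 0.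
Proof.
move=> h v; rewrite sqdefE in h; rewrite !dotE big1 // => i _.
have hi : u ord0 i ^+ 2 = 0.
  by apply: (psumr_eq0P _ h) => // j _; apply: sqr_ge0.
by move/eqP: hi; rewrite sqrf_eq0 => /eqP ->; rewrite mul0r.
Qed.

Lemma cauchy_schwarz u v : dot u v ^+ 2 <= sq u * sq v.
Proof.
have [h|h] := eqVneq (sq v) 0.
  by rewrite h mulr0 dotC sq_eq0 // expr0n.
have hv : 0 < sq v by rewrite lt_def h sq_ge0.
pose t := dot u v / sq v.
have := sq_ge0 (u - t *: v); rewrite sqB dotZr sqZ /t => H.
have e : sq u - 2 * (dot u v / sq v * dot u v) + (dot u v / sq v) ^+ 2 * sq v
   = sq u - dot u v ^+ 2 / sq v by field.
by rewrite e subr_ge0 ler_pdivrMr // in H.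
Qed.

Lemma dot_le u v : dot u v <= enorm u * enorm v.
Proof.
rewrite !enormE -sqrtrM ?sq_ge0 //.
apply: (le_trans (ler_norm _)).
by rewrite -sqrtr_sqr; apply: ler_wsqrtr; apply: cauchy_schwarz.
Qed.

Lemma enorm_ge0 u : 0 <= enorm u.
Proof. exact: sqrtr_ge0. Qed.

Lemma enorm_triangle u v : enorm (u + v) <= enorm u + enorm v.
Proof.
have hge : 0 <= enorm u + enorm v by rewrite addr_ge0 ?enorm_ge0.
rewrite {1}enormE -(ger0_norm hge) -sqrtr_sqr.
apply: ler_wsqrtr; rewrite sqD sqrrD !enormE !sqr_sqrtr ?sq_ge0 //.
have := dot_le u v; rewrite !enormE; lra.
Qed.

Lemma enormZ a u : enorm (a *: u) = `|a| * enorm u.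
Proof. by rewrite !enormE sqZ sqrtrM ?sqr_ge0 // sqrtr_sqr. Qed.

Lemma enormN u : enorm (- u) = enorm u.
Proof. by rewrite !enormE sqN. Qed.

Lemma enormB u v : enorm (u - v) = enorm (v - u).
Proof. by rewrite -enormN opprB. Qed.

Lemma enorm0 : enorm (0 : 'rV[R]_n) = 0.
Proof. by rewrite enormE sqE dot0l sqrtr0. Qed.

End Vec.

Section Geo.
Variables (R : realType) (n : nat) (A : set 'rV[R]_n).

Definition near (y : 'rV[R]_n) (r : R) :=
  forall e, 0 < e -> exists a, A a /\ enorm (y - a) <= r + e.

Lemma near_edist y r : near y r -> (edist y A <= r%:E)%E.
Proof.
move=> H; apply/lee_addgt0Pr => e he.
have [a [Aa h]] := H e he.
apply: ge_ereal_inf; exists (enorm (y - a))%:E; first by exists a.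
by rewrite -EFinD lee_fin.
Qed.

Lemma edist_near y r : (edist y A <= r%:E)%E -> near y r.
Proof.
move=> H e he.
have : (edist y A < (r + e)%:E)%E.
  by apply: le_lt_trans H _; rewrite lte_fin ltrDl.
case/ereal_inf_lt => z [a Aa <-]; rewrite lte_fin => h.
by exists a; split => //; apply: ltW.
Qed.

Lemma near_mono y r s : near y r -> r <= s -> near y s.
Proof.
move=> H hrs e he; have [a [Aa h]] := H e he.
by exists a; split => //; apply: (le_trans h); rewrite lerD2r.
Qed.

Lemma near_shift y z s : near z s -> near y (enorm (y - z) + s).
Proof.
move=> H e he; have [a [Aa h]] := H e he.
exists a; split => //.
have -> : y - a = (y - z) + (z - a) by rewrite addrA subrK.
apply: (le_trans (enorm_triangle _ _)); lra.
Qed.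

Lemma near_self a : A a -> near a 0.
Proof.
move=> Aa e he; exists a; split => //.
by rewrite subrr enorm0 add0r ltW.
Qed.

Lemma near_mid (hA : approx_convex A) y1 y2 r :
  near y1 r -> near y2 r -> near (2^-1 *: y1 + 2^-1 *: y2) (r + 1).
Proof.
move=> h1 h2 e he.
have he2 : 0 < e / 2 by rewrite divr_gt0.
have [b1 [A1 hb1]] := h1 _ he2.
have [b2 [A2 hb2]] := h2 _ he2.
have hz : (edist (2^-1 *: b1 + (1 - 2^-1) *: b2) A <= 1%:E)%E.
  apply: hA => //; apply/andP; split; first by rewrite invr_ge0.
  by rewrite invf_le1 // ler1n.
have e2 : (1 - 2^-1 : R) = 2^-1 by field.
rewrite e2 in hz.
have [a [Aa ha]] := edist_near hz he2.
exists a; split => //.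
have -> : 2^-1 *: y1 + 2^-1 *: y2 - a =
   (2^-1 *: (y1 - b1) + 2^-1 *: (y2 - b2)) + (2^-1 *: b1 + 2^-1 *: b2 - a).
  by apply/matrixP => i j; rewrite !mxE; ring.
apply: (le_trans (enorm_triangle _ _)).
have := enorm_triangle (2^-1 *: (y1 - b1)) (2^-1 *: (y2 - b2)).
rewrite !enormZ ger0_norm ?invr_ge0 // => h.
lra.
Qed.

End Geo.

Section Pair.
Variables (R : realType) (n : nat).

Lemma dot_sumr (I : finType) (c : I -> R) (q : I -> 'rV[R]_n) v :
  dot v (\sum_i c i *: q i) = \sum_i c i * dot v (q i).
Proof. by rewrite dotC dot_suml; apply: eq_bigr => i _; rewrite dotC. Qed.

Lemma pair_sum (I : finType) (w : I -> R) (u : I -> 'rV[R]_n) a b c :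
  \sum_i w i = 1 -> \sum_i w i *: u i = 0 ->
  \sum_i \sum_l w i * w l * (a * sq (u i) + b * dot (u i) (u l) + c * sq (u l))
  = (a + c) * \sum_i w i * sq (u i).
Proof.
move=> hw hu.
transitivity (\sum_i (a * (w i * sq (u i)) + (c * \sum_l w l * sq (u l)) * w i)).
  apply: eq_bigr => i _.
  have -> : \sum_l w i * w l * (a * sq (u i) + b * dot (u i) (u l) + c * sq (u l))
    = w i * a * sq (u i) * (\sum_l w l) + w i * b * (\sum_l w l * dot (u i) (u l))
      + w i * c * (\sum_l w l * sq (u l)).
    rewrite !mulr_sumr.
    rewrite -!big_split; apply: eq_bigr => l _ /=; ring.
  by rewrite -dot_sumr hu dotC dot0l hw; ring.
by rewrite big_split /= -!mulr_sumr hw; ring.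
Qed.

End Pair.

Section Q.
Variables (R : realType) (n : nat) (A : set 'rV[R]_n).
Hypothesis hA : approx_convex A.

Lemma Qm (m : nat) : forall (I : finType) (w : I -> R) (q : I -> 'rV[R]_n) (r : R),
  (forall i, 0 <= w i) -> \sum_i w i = 1 -> (forall i, near A (q i) r) ->
  exists y, near A y (r + m%:R) /\
    sq (\sum_i w i *: q i - y) <= (\sum_i w i * sq (q i - \sum_j w j *: q j)) / 2 ^+ m.
Proof.
elim: m => [|m IH] I w q r hw0 hw1 hq.
  set x := \sum_j w j *: q j; set V := \sum_i w i * sq (q i - x).
  have [/existsP [i hi] | /existsPn hn] := boolP [exists i, sq (q i - x) <= V].
    exists (q i); split; first by rewrite addr0.
    by rewrite expr0 divr1 -sqN opprB.
  exfalso.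
  have hlt i : 0 < sq (q i - x) - V by rewrite subr_gt0 ltNge hn.
  have h0 : \sum_i w i * (sq (q i - x) - V) = 0.
    under eq_bigr do rewrite mulrBr.
    by rewrite sumrB -mulr_suml hw1 mul1r subrr.
  have hz i : w i = 0.
    have /eqP := psumr_eq0P (P := xpredT) (F := fun i => w i * (sq (q i - x) - V))
      (fun j _ => mulr_ge0 (hw0 j) (ltW (hlt j : 0 < _))) h0 (i := i) isT.
    rewrite mulf_eq0 => /orP [/eqP //|]; rewrite subr_eq0 => /eqP e.
    by move: (hlt i); rewrite e subrr ltxx.
  by move: hw1; rewrite big1 // => /eqP; rewrite eq_sym oner_eq0.
set x := \sum_j w j *: q j; set V := \sum_i w i * sq (q i - x).
pose w' := fun p : I * I => w p.1 * w p.2.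
pose q' := fun p : I * I => 2^-1 *: q p.1 + 2^-1 *: q p.2.
have hw0' p : 0 <= w' p by rewrite mulr_ge0.
have hw1' : \sum_p w' p = 1.
  rewrite /w' -(pair_bigA _ (fun i l => w i * w l)) /=.
  by under eq_bigr => i _ do rewrite -mulr_sumr hw1 mulr1.
have hq' p : near A (q' p) (r + 1) := near_mid hA (hq p.1) (hq p.2).
have [y [hy1 hy2]] := IH _ w' q' (r + 1) hw0' hw1' hq'.
have hx : \sum_p w' p *: q' p = x.
  rewrite -(pair_bigA _ (fun i l => w' (i, l) *: q' (i, l))) /w' /q' /=.
  transitivity (\sum_i \sum_l ((2^-1 * w l) *: (w i *: q i) + (2^-1 * w i) *: (w l *: q l))).
    apply: eq_bigr => i _; apply: eq_bigr => l _.
    by apply/matrixP => a b; rewrite !mxE; ring.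
  under eq_bigr do rewrite big_split.
  rewrite big_split /= [X in _ + X = _]exchange_big /=.
  have e : \sum_i \sum_l (2^-1 * w l) *: (w i *: q i) = 2^-1 *: x.
    rewrite /x scaler_sumr; apply: eq_bigr => i _.
    by rewrite -scaler_suml -mulr_sumr hw1 mulr1.
  rewrite !e -scalerDl.
  have -> : (2^-1 + 2^-1 : R) = 1 by field.
  by rewrite scale1r.
have hV : \sum_p w' p * sq (q' p - x) = V / 2.
  rewrite -(pair_bigA _ (fun i l => w' (i, l) * sq (q' (i, l) - x))) /w' /q' /=.
  pose u := fun i => q i - x.
  have hu : \sum_i w i *: u i = 0.
    rewrite /u; under eq_bigr do rewrite scalerBr.
    by rewrite sumrB -scaler_suml hw1 scale1r subrr.
  transitivity (\sum_i \sum_l w i * w l * ((2^-1) ^+ 2 * sq (u i)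
      + (2 * (2^-1 * 2^-1)) * dot (u i) (u l) + (2^-1) ^+ 2 * sq (u l))).
    apply: eq_bigr => i _; apply: eq_bigr => l _.
    have -> : 2^-1 *: q i + 2^-1 *: q l - x = 2^-1 *: u i + 2^-1 *: u l.
      by rewrite /u; apply/matrixP => a b; rewrite !mxE; field.
    by rewrite sqD !sqZ dotZl dotZr; ring.
  by rewrite pair_sum // /V /u; field.
exists y; split.
  apply: near_mono hy1 _; rewrite -[m.+1]addn1 natrD; lra.
rewrite hx hV in hy2.
by rewrite exprS invfM mulrA.
Qed.

End Q.

Section Key.
Variables (R : realType) (n : nat) (A : set 'rV[R]_n).
Hypothesis hA : approx_convex A.

Lemma key (D : R) (hD : forall a b, A a -> A b -> enorm (a - b) <= D) x :
  convex_hull A x -> forall m : nat,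
  near A x (m%:R + Num.sqrt (D ^+ 2 / 2 ^+ m.+1)).
Proof.
move=> [k [w [p [hw0 [hw1 [hp ->]]]]]] m.
have [y [hy1 hy2]] := Qm hA m (w := w) (q := p) (r := 0) hw0 hw1 (fun i => near_self (hp i)).
set x0 := \sum_i w i *: p i in hy2 *.
set V := \sum_i w i * sq (p i - x0) in hy2.
have hV : V <= D ^+ 2 / 2.
  pose u := fun i => p i - x0.
  have hu : \sum_i w i *: u i = 0.
    rewrite /u; under eq_bigr do rewrite scalerBr.
    by rewrite sumrB -scaler_suml hw1 scale1r subrr.
  have e2 := pair_sum 1 (-2) 1 hw1 hu.
  have : \sum_i \sum_l w i * w l * (1 * sq (u i) + -2 * dot (u i) (u l) + 1 * sq (u l))
       <= \sum_i \sum_l w i * w l * D ^+ 2.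
    apply: ler_sum => i _; apply: ler_sum => l _.
    apply: ler_wpM2l; first by rewrite mulr_ge0.
    have -> : 1 * sq (u i) + -2 * dot (u i) (u l) + 1 * sq (u l) = sq (p i - p l).
      have -> : p i - p l = u i - u l by rewrite /u opprB addrA subrK.
      by rewrite sqB; ring.
    have h1 := hD _ _ (hp i) (hp l); have h0 := enorm_ge0 (p i - p l).
    rewrite enormE in h1 h0; rewrite -(sqr_sqrtr (sq_ge0 (p i - p l))).
    nra.
  rewrite e2.
  have -> : \sum_i \sum_l w i * w l * D ^+ 2 = D ^+ 2.
    under eq_bigr => i _ do rewrite -mulr_suml -mulr_sumr hw1 mulr1.
    by rewrite -mulr_suml hw1 mul1r.
  rewrite /V /u; lra.
apply: near_mono (near_shift x0 hy1) _.
rewrite add0r addrC lerD2l enormE; apply: ler_wsqrtr.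
apply: (le_trans hy2); rewrite [2 ^+ m.+1]exprS invfM mulrA.
by apply: ler_wpM2r; [rewrite invr_ge0 exprn_ge0 | exact: hV].
Qed.

End Key.

Section Real.
Variable R : realType.

Lemma sq_le (x y : R) : 0 <= x -> 0 <= y -> x ^+ 2 <= y ^+ 2 -> x <= y.
Proof. by move=> hx hy; rewrite ler_pXn2r. Qed.

Lemma le_sqrt_sq (t X : R) : 0 <= t -> 0 <= X -> t <= Num.sqrt X -> t ^+ 2 <= X.
Proof.
move=> ht hX h; rewrite -(sqr_sqrtr hX) ler_pXn2r //.
by rewrite qualifE /= sqrtr_ge0.
Qed.

Lemma ln2_pos : 0 < ln (2 : R).
Proof. by apply: ln_gt0; rewrite ltr1n. Qed.

Lemma log2_ge (x : R) (k : nat) : 2 ^+ k <= x -> k%:R <= log2 x.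
Proof.
move=> h; rewrite /log2 ler_pdivlMr ?ln2_pos //.
have hp : (0 : R) < 2 ^+ k by rewrite exprn_gt0.
rewrite mulr_natl -lnXn ?ltr0n //.
by rewrite ler_ln // qualifE /= ?(lt_le_trans hp h).
Qed.

Lemma log2_le (x : R) (k : nat) : 0 < x -> log2 x <= k%:R -> x <= 2 ^+ k.
Proof.
move=> hx; rewrite /log2 ler_pdivrMr ?ln2_pos //.
rewrite mulr_natl -lnXn ?ltr0n //.
by rewrite ler_ln // qualifE /= ?exprn_gt0.
Qed.

End Real.

Section Part1.
Variable R : realType.

Lemma part1_real (n j : nat) (D : R) : (1 <= n)%N -> (1 <= j <= n)%N -> 0 <= D ->
  (forall m : nat, log2 (n%:R : R) - 1 <= m%:R + Num.sqrt (D ^+ 2 / 2 ^+ m.+1)) ->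
  (log2 (n%:R : R) - 1 - (Num.ceil (log2 (j%:R : R)))%:~R)
     * Num.sqrt (j%:R) / Num.sqrt ((n - j + 1)%:R) * Num.sqrt (n%:R) <= D.
Proof.
move=> hn /andP [hj1 hjn] hD hm.
have hS : 0 <= Num.sqrt (j%:R : R) / Num.sqrt (n - j + 1)%:R * Num.sqrt n%:R.
  by rewrite mulr_ge0 ?divr_ge0 ?sqrtr_ge0.
have hl2 := ln2_pos R.
have hl0 : 0 <= log2 (j%:R : R).
  by rewrite /log2 divr_ge0 ?ln_ge0 ?ler1n // ltW.
case E : (Num.ceil (log2 (j%:R : R))) => [m|m]; last first.
  have : (0 <= Num.ceil (log2 (j%:R : R)))%R by rewrite ceil_ge0; lra.
  by rewrite E.
have hc : log2 (j%:R : R) <= m%:R by have := ceil_ge (log2 (j%:R : R)); rewrite E.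
change ((Posz m)%:~R) with (m%:R : R).
set L := log2 (n%:R : R) - 1.
have -> : (L - m%:R) * Num.sqrt j%:R / Num.sqrt (n - j + 1)%:R * Num.sqrt n%:R
    = (L - m%:R) * (Num.sqrt j%:R / Num.sqrt (n - j + 1)%:R * Num.sqrt n%:R).
  by rewrite !mulrA.
case: (leP (L - m%:R) 0) => h.
  by apply: le_trans (mulr_le0_ge0 h hS) hD.
have hj0 : (0 : R) < j%:R by rewrite ltr0n.
have hjm : (j%:R : R) <= 2 ^+ m := log2_le hj0 hc.
have h2j : (j%:R * 2 : R) < n%:R.
  have e1 : ln (j%:R : R) + ln 2 < ln n%:R.
    have hi : 0 < (ln (2:R))^-1 by rewrite invr_gt0.
    rewrite -(ltr_pM2r hi).
    rewrite mulrDl divff ?gt_eqF //.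
    move: hc h; rewrite /L /log2; lra.
  rewrite -lnM ?qualifE /= ?ltr0n // in e1.
  by rewrite -ltr_ln // qualifE /= ?mulr_gt0 // ltr0n; lia.
have hX : (L - m%:R) ^+ 2 <= D ^+ 2 / 2 ^+ m.+1.
  apply: le_sqrt_sq; first exact: ltW.
    by rewrite divr_ge0 ?sqr_ge0 ?exprn_ge0.
  by have := hm m; rewrite /L; lra.
have hK : ((n - j + 1)%:R : R) = n%:R - j%:R + 1 by rewrite natrD natrB.
have hKp : (0 : R) < n%:R - j%:R + 1.
  by rewrite -hK ltr0n addn1.
apply: sq_le; [by rewrite mulr_ge0 // ltW | exact: hD |].
rewrite exprMn !exprMn exprVn !sqr_sqrtr ?ler0n // hK.
rewrite ler_pdivlMr ?exprn_gt0 // in hX.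
set a2 := (L - m%:R) ^+ 2 in hX *.
have ha2 : 0 <= a2 by rewrite sqr_ge0.
set J := (j%:R : R) in hj0 hjm h2j *; set N := (n%:R : R) in h2j *.
set K := N - J + 1 in hKp *.
have hP : (2 : R) ^+ m.+1 = 2 * 2 ^+ m by rewrite exprS.
rewrite hP in hX.
set P := (2 : R) ^+ m in hjm hX.
have hJN : J * N <= 2 * P * K.
  have h1 : 0 <= (P - J) * K by rewrite mulr_ge0 // ?subr_ge0 // ltW.
  have h2 : 0 <= J * (2 * K - N) by rewrite mulr_ge0 ?ltW //; rewrite /K; lra.
  nra.
apply: le_trans hX; apply: ler_wpM2l => //.
by rewrite mulrAC ler_pdivrMr.
Qed.

End Part1.

Section Part23.
Variable R : realType.

Lemma part23_real (n : nat) (D : R) : (8 <= n)%N -> 0 <= D ->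
  (forall m : nat, log2 (n%:R : R) - 1 <= m%:R + Num.sqrt (D ^+ 2 / 2 ^+ m.+1)) ->
  768%:R / 1000%:R * Num.sqrt (n%:R) <= D.
Proof.
move=> hn hD hm.
have hpos : (0 < n %/ 8)%N by rewrite divn_gt0.
have := trunc_log_bounds (isT : (1 < 2)%N) hpos.
set m := trunc_log 2 (n %/ 8) => /andP [h1 h2].
rewrite expnS in h2.
have hn1 : (8 * 2 ^ m <= n)%N.
  by move: h1; lia.
have hn2 : (n < 16 * 2 ^ m)%N.
  by move: h2; lia.
have hN1 : 8 * (2:R) ^+ m <= n%:R.
  by move: hn1; rewrite -(ler_nat R) natrM natrX.
have hN2 : (n%:R : R) < 16 * 2 ^+ m.
  by move: hn2; rewrite -(ltr_nat R) natrM natrX.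
set P := (2:R) ^+ m in hN1 hN2.
set N := (n%:R : R) in hN1 hN2 hm *.
have hP0 : 0 < P by rewrite exprn_gt0.
have hkey t : 0 <= t -> t <= log2 N - 1 - m%:R -> t ^+ 2 * (2 * P) <= D ^+ 2.
  move=> ht htL.
  have : t ^+ 2 <= D ^+ 2 / 2 ^+ m.+1.
    apply: le_sqrt_sq => //; first by rewrite divr_ge0 ?sqr_ge0 ?exprn_ge0.
    by have := hm m; lra.
  by move=> H; rewrite ler_pdivlMr ?exprn_gt0 // [2 ^+ m.+1]exprS in H.
have hL : (m + 3)%:R <= log2 N.
  have e8 : (2:R) ^+ 3 = 8 by rewrite -natrX.
  by apply: log2_ge; rewrite exprD -/P e8; lra.
rewrite natrD in hL.
have hD2 : 2 / 3 * N <= D ^+ 2.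
  case: (leP (12 * P) N) => hc.
    have hL2 : (2 * m + 7)%:R <= log2 (N ^+ 2).
      apply: log2_ge; rewrite exprD mulnC exprM -/P.
      have -> : (2:R) ^+ 7 = 128 by rewrite -natrX.
      have hq1 : 0 <= (N - 12 * P) * (N + 12 * P).
        by apply: mulr_ge0; lra.
      rewrite !expr2; nra.
    have e : log2 (N ^+ 2) = 2 * log2 N.
      have hNp : 0 < N by rewrite ltr0n; lia.
      by rewrite /log2 lnXn // -[ln N *+ 2]mulr_natl mulrA.
    rewrite e natrD natrM in hL2.
    have ht : (5 / 2 : R) <= log2 N - 1 - m%:R by lra.
    have H := hkey (5 / 2) ltac:(lra) ht.
    rewrite expr2 in H; lra.
  have ht : (2 : R) <= log2 N - 1 - m%:R by lra.
  have H := hkey 2 ltac:(lra) ht.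
  rewrite expr2 in H; lra.
apply: sq_le; [by rewrite mulr_ge0 ?sqrtr_ge0 | exact: hD |].
rewrite exprMn sqr_sqrtr ?ler0n //.
have hN0 : 0 <= N by rewrite ler0n.
rewrite expr2; lra.
Qed.

End Part23.

Section Glue.
Variables (R : realType) (n : nat) (A : set 'rV[R]_n).

Lemma hull_self a : A a -> convex_hull A a.
Proof.
move=> Aa; exists 1%N, (fun _ => 1), (fun _ => a).
split; first by move=> i; apply: ler01.
split; first by rewrite big_ord1.
split; first by [].
by rewrite big_ord1 scale1r.
Qed.

Lemma diam_ub (D : R) : diam A = D%:E ->
  forall a b, A a -> A b -> enorm (a - b) <= D.
Proof.
rewrite /diam => hd a b Aa Ab.
have h : [set (enorm (p.1 - p.2))%:E | p in A `*` A] (enorm (a - b))%:E.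
  by exists (a, b).
by have := ereal_sup_ubound h; rewrite hd lee_fin.
Qed.

Lemma diam_ge0 : A !=set0 -> (0%:E <= diam A)%E.
Proof.
move=> [a Aa]; rewrite /diam.
have h : [set (enorm (p.1 - p.2))%:E | p in A `*` A] (enorm (a - a))%:E.
  by exists (a, a).
by apply: le_trans (ereal_sup_ubound h); rewrite subrr enorm0.
Qed.

Lemma main_bound (hA : approx_convex A) (L : R)
  (hL : (L%:E <= hausdorff A (convex_hull A))%E) (D : R) (hd : diam A = D%:E) (m : nat) :
  L <= m%:R + Num.sqrt (D ^+ 2 / 2 ^+ m.+1).
Proof.
have hD := diam_ub hd.
rewrite -lee_fin; apply: le_trans hL _.
rewrite /hausdorff ge_max; apply/andP; split.
  apply: ge_ereal_sup => _ [a Aa <-].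
  apply: le_trans (near_edist (near_self (hull_self Aa))) _.
  by rewrite lee_fin addr_ge0 ?sqrtr_ge0.
apply: ge_ereal_sup => _ [x hx <-].
exact: near_edist (key hA hD hx m).
Qed.

End Glue.

Theorem theorem5p3 (R : realType) :
  (forall (n : nat) (A : set 'rV[R]_n),
     (1 <= n)%N -> A !=set0 -> approx_convex A ->
     ((log2 (n%:R : R) - 1)%:E <= hausdorff A (convex_hull A))%E ->
     forall j : nat, (1 <= j <= n)%N ->
       (((log2 (n%:R : R) - 1 - (Num.ceil (log2 (j%:R : R)))%:~R)
          * Num.sqrt (j%:R) / Num.sqrt ((n - j + 1)%:R) * Num.sqrt (n%:R))%:E
        <= diam A)%E)
  /\
  (forall (n : nat) (A : set 'rV[R]_n),
     (20 <= n)%N -> A !=set0 -> approx_convex A ->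
     ((log2 (n%:R : R) - 1)%:E <= hausdorff A (convex_hull A))%E ->
     ((7525%:R / 10000%:R * Num.sqrt (n%:R))%:E <= diam A)%E)
  /\
  (exists N : nat, forall (n : nat) (A : set 'rV[R]_n),
     (N <= n)%N -> A !=set0 -> approx_convex A ->
     ((log2 (n%:R : R) - 1)%:E <= hausdorff A (convex_hull A))%E ->
     ((768%:R / 1000%:R * Num.sqrt (n%:R))%:E <= diam A)%E).
Proof.
split.
  move=> n A hn hA0 hA hL j hj.
  have h0 := diam_ge0 hA0.
  case hd : (diam A) h0 => [D| |] h0; last by [].
    rewrite lee_fin in h0; rewrite lee_fin.
    exact: part1_real hn hj h0 (main_bound hA hL hd).
  by rewrite leey.
split.
  move=> n A hn hA0 hA hL.
  have h0 := diam_ge0 hA0.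
  case hd : (diam A) h0 => [D| |] h0; last by [].
    rewrite lee_fin in h0; rewrite lee_fin.
    have h8 : (8 <= n)%N by apply: leq_trans hn.
    have := part23_real h8 h0 (main_bound hA hL hd).
    have hs := sqrtr_ge0 (n%:R : R).
    apply: le_trans; apply: ler_wpM2r => //; lra.
  by rewrite leey.
exists 8%N => n A hn hA0 hA hL.
have h0 := diam_ge0 hA0.
case hd : (diam A) h0 => [D| |] h0; last by [].
  rewrite lee_fin in h0; rewrite lee_fin.
  exact: part23_real hn h0 (main_bound hA hL hd).
by rewrite leey.
Qed.
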